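(* Let $S$ be a semilattice and let $\psi:S\to\mathbb C$ satisfy $\operatorname{def}(\psi):=\sup_{x,y\in S}|\psi(x)\psi(y)-\psi(xy)|<1/5$. Let $S_1=\{e\in S:\ |\psi(e)-1|<7/25\}$ and let $\chi$ be the indicator function of $S_1$. Then $\chi:S\to\mathbb C$ is multiplicative (i.e. $\chi(xy)=\chi(x)\chi(y)$ for all $x,y\in S$) and $\sup_{e\in S}|\psi(e)-\chi(e)|\le\frac75\operatorname{def}(\psi)$.
   Context: A semilattice is a commutative semigroup in which every element is idempotent. *)

(* Defs.v *)
From Stdlib Require Import Reals.
Open Scope R_scope.

Definition Cpx := (R * R)%type.
Definition C0 : Cpx := (0, 0).
Definition C1 : Cpx := (1, 0).
Definition Cmul (z w : Cpx) : Cpx :=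
  (fst z * fst w - snd z * snd w, fst z * snd w + snd z * fst w).
Definition Csub (z w : Cpx) : Cpx := (fst z - fst w, snd z - snd w).
Definition Cnorm (z : Cpx) : R := sqrt (fst z * fst z + snd z * snd z).

Definition is_semilattice {S : Type} (op : S -> S -> S) : Prop :=
  (forall x y z, op x (op y z) = op (op x y) z) /\
  (forall x y, op x y = op y x) /\
  (forall x, op x x = x).

Definition defect_values {S : Type} (op : S -> S -> S) (psi : S -> Cpx) (r : R) : Prop :=
  exists x y, r = Cnorm (Csub (Cmul (psi x) (psi y)) (psi (op x y))).

Definition S1 {S : Type} (psi : S -> Cpx) (e : S) : Prop :=
  Cnorm (Csub (psi e) C1) < 7/25.

Definition chi {S : Type} (psi : S -> Cpx) (e : S) : Cpx :=
  if Rlt_dec (Cnorm (Csub (psi e) C1)) (7/25) then C1 else C0.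

(* Main.v *)
Require Import Defs.
From Stdlib Require Import Reals Lra Psatz.
From Coquelicot Require Import Coquelicot.
Open Scope R_scope.

Lemma nm_mod (z : Cpx) : Cnorm z = Cmod z.
Proof. unfold Cnorm, Cmod. f_equal. simpl. ring. Qed.

Lemma csub_eq (z w : Cpx) : Csub z w = Cminus z w.
Proof. destruct z, w. unfold Csub, Cminus, Cplus, Copp; simpl. f_equal. Qed.

Lemma nm_ge0 z : 0 <= Cnorm z.
Proof. rewrite nm_mod. apply Cmod_ge_0. Qed.

Lemma nm_mul z w : Cnorm (Cmul z w) = Cnorm z * Cnorm w.
Proof. rewrite !nm_mod. apply Cmod_mult. Qed.

Lemma nm_tri x y z : Cnorm (Csub x z) <= Cnorm (Csub x y) + Cnorm (Csub y z).
Proof.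
  rewrite !nm_mod.
  replace (Csub x z) with (Cplus (Csub x y) (Csub y z)).
  - apply Cmod_triangle.
  - destruct x, y, z; unfold Csub, Cplus; simpl; f_equal; ring.
Qed.

Lemma nm_sym x y : Cnorm (Csub x y) = Cnorm (Csub y x).
Proof. unfold Cnorm, Csub; simpl. f_equal. ring. Qed.

Lemma nm_0 x : Cnorm (Csub x Defs.C0) = Cnorm x.
Proof. unfold Cnorm, Csub; simpl. f_equal. ring. Qed.

Lemma key a b d : 0 <= a -> 0 <= b -> 1 <= a + b -> a * b <= d -> d < 1/5 ->
  (b < 7/25 -> b <= 7/5 * d) /\ (7/25 <= b -> a <= 7/5 * d).
Proof.
  intros Ha Hb Hs Hab Hd; split; intro Hb2.
  - assert (b * (a - 18/25) >= 0) by nra. nra.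
  - assert (a < 7/25).
    { destruct (Rlt_or_le a (7/25)) as [H|H]; [exact H|].
      exfalso. destruct (Rle_or_lt a b) as [H1|H1].
      + destruct (Rle_or_lt (1/2) a) as [H2|H2].
        * nra.
        * assert ((a - 7/25) * (18/25 - a) >= 0) by nra.
          assert (a * (b - (1 - a)) >= 0) by nra. nra.
      + destruct (Rle_or_lt (1/2) b) as [H2|H2].
        * nra.
        * assert ((b - 7/25) * (18/25 - b) >= 0) by nra.
          assert (b * (a - (1 - b)) >= 0) by nra. nra. }
    assert (a * (b - 18/25) >= 0) by nra. nra.
Qed.

Section P.
Variables (S : Type) (op : S -> S -> S) (psi : S -> Cpx) (d : R).
Hypothesis Hsl : is_semilattice op.
Hypothesis Hub : forall x y, Cnorm (Csub (Cmul (psi x) (psi y)) (psi (op x y))) <= d.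
Hypothesis Hd : d < 1/5.


Lemma idem_bound e :
  (Cnorm (Csub (psi e) Defs.C1) < 7/25 -> Cnorm (Csub (psi e) Defs.C1) <= 7/5 * d) /\
  (7/25 <= Cnorm (Csub (psi e) Defs.C1) -> Cnorm (psi e) <= 7/5 * d).
Proof.
  destruct Hsl as [_ [_ Hi]].
  pose proof (Hub e e) as H. rewrite Hi in H.
  set (z := psi e) in *.
  apply key.
  - apply nm_ge0.
  - apply nm_ge0.
  - pose proof (nm_tri Defs.C1 z Defs.C0). rewrite (nm_0 z) in H0.
    rewrite (nm_sym Defs.C1 z) in H0.
    assert (Cnorm (Csub Defs.C1 Defs.C0) = 1).
    { unfold Cnorm, Csub; simpl. replace ((1-0)*(1-0) + (0-0)*(0-0)) with 1 by ring.
      apply sqrt_1. }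
    lra.
  - replace (Csub (Cmul z z) z) with (Cmul z (Csub z Defs.C1)) in H.
    + rewrite nm_mul in H. exact H.
    + destruct z; unfold Cmul, Csub, Defs.C1; simpl; f_equal; ring.
  - exact Hd.
Qed.

Lemma nm_one : Cnorm (Csub Defs.C1 Defs.C0) = 1.
Proof. unfold Cnorm, Csub; simpl. replace ((1-0)*(1-0) + (0-0)*(0-0)) with 1 by ring.
  apply sqrt_1. Qed.

Lemma nm_lo z : 1 - Cnorm (Csub z Defs.C1) <= Cnorm z.
Proof. pose proof (nm_tri Defs.C1 z Defs.C0). rewrite (nm_0 z), nm_one, (nm_sym Defs.C1 z) in H. lra. Qed.

Lemma nm_hi z : Cnorm z <= 1 + Cnorm (Csub z Defs.C1).
Proof. pose proof (nm_tri z Defs.C1 Defs.C0). rewrite (nm_0 z), nm_one in H. lra. Qed.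

Lemma chi_cases e :
  (chi psi e = Defs.C1 /\ Cnorm (Csub (psi e) Defs.C1) <= 7/5*d) \/
  (chi psi e = Defs.C0 /\ Cnorm (psi e) <= 7/5*d).
Proof.
  destruct (idem_bound e) as [H1 H2]. unfold chi.
  destruct (Rlt_dec (Cnorm (Csub (psi e) Defs.C1)) (7/25)) as [H|H].
  - left. auto.
  - right. split; auto. apply H2. lra.
Qed.

Lemma mult x y : chi psi (op x y) = Cmul (chi psi x) (chi psi y).
Proof.
  pose proof (Hub x y) as H.
  pose proof (nm_ge0 (Csub (Cmul (psi x) (psi y)) (psi (op x y)))).
  pose proof (nm_tri (Cmul (psi x) (psi y)) (psi (op x y)) Defs.C0) as T1.
  pose proof (nm_tri (psi (op x y)) (Cmul (psi x) (psi y)) Defs.C0) as T2.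
  rewrite !nm_0, nm_mul in T1, T2.
  rewrite (nm_sym (psi (op x y))) in T2.
  pose proof (nm_ge0 (psi x)). pose proof (nm_ge0 (psi y)). pose proof (nm_ge0 (psi (op x y))).
  pose proof (nm_lo (psi x)). pose proof (nm_lo (psi y)). pose proof (nm_lo (psi (op x y))).
  pose proof (nm_hi (psi x)). pose proof (nm_hi (psi y)).
  destruct (chi_cases x) as [[Ex Nx]|[Ex Nx]];
  destruct (chi_cases y) as [[Ey Ny]|[Ey Ny]];
  destruct (chi_cases (op x y)) as [[Ez Nz]|[Ez Nz]];
  rewrite Ex, Ey, Ez; try (unfold Cmul, Defs.C1, Defs.C0; simpl; f_equal; ring);
  exfalso.
  - assert (Cnorm (psi x) * Cnorm (psi y) >= (1 - 7/5*d) * (1 - 7/5*d)).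
    { apply Rle_ge. apply Rmult_le_compat; nra. }
    nra.
  - assert (Cnorm (psi x) * Cnorm (psi y) <= (7/5*d) * (1 + 7/5*d)).
    { apply Rmult_le_compat; nra. }
    nra.
  - assert (Cnorm (psi x) * Cnorm (psi y) <= (1 + 7/5*d) * (7/5*d)).
    { apply Rmult_le_compat; nra. }
    nra.
  - assert (Cnorm (psi x) * Cnorm (psi y) <= (7/5*d) * (1 + 7/5*d)).
    { apply Rmult_le_compat; nra. }
    nra.
Qed.
End P.

Theorem propositionp (S : Type) (op : S -> S -> S) (psi : S -> Cpx) (d : R) :
  is_semilattice op ->
  is_lub (defect_values op psi) d ->
  d < 1/5 ->
  (forall x y, chi psi (op x y) = Cmul (chi psi x) (chi psi y)) /\
  (forall e, Cnorm (Csub (psi e) (chi psi e)) <= 7/5 * d).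
Proof.
  intros Hsl [Hub _] Hd.
  assert (Hb : forall x y, Cnorm (Csub (Cmul (psi x) (psi y)) (psi (op x y))) <= d).
  { intros x y. apply Hub. exists x, y. reflexivity. }
  split.
  - intros x y. apply (mult S op psi d Hsl Hb Hd).
  - intro e. destruct (chi_cases S op psi d Hsl Hb Hd e) as [[E N]|[E N]]; rewrite E.
    + exact N.
    + rewrite nm_0. exact N.
Qed.
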